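(* Let $\mathbb{V}$ and $\mathbb{V}'$ be varieties with signatures $\mathcal{F}\subseteq\mathcal{F}'$ and defining sets of identities $\Sigma\subseteq\Sigma'$ respectively, and suppose $\mathbb{V}$ is BIT speciale with terms $0,\alpha_1,\dots,\alpha_n,\theta$. Let $T$ be any set of ideal terms determining ideals in $\mathbb{V}$. (a) The union of $T$ with the set of terms $$\alpha_i\big(\tau(\theta(y_{11},\dots,y_{1n},x_1),\dots,\theta(y_{k1},\dots,y_{kn},x_k)),\ \tau(x_1,\dots,x_k)\big),$$ for all $\tau\in\mathcal{F}'\setminus\mathcal{F}$ (of arity $k$) and all $1\le i\le n$, determines ideals in $\mathbb{V}'$. (b) The union of $T$ with the set of terms $$\alpha_i\big(\tau(x_1,\dots,x_{j-1},\theta(y_1,\dots,y_n,x_j),x_{j+1},\dots,x_k),\ \tau(x_1,\dots,x_k)\big),$$ for all $\tau\in\mathcal{F}'\setminus\mathcal{F}$ (of arity $k$) and all $1\le i\le n$, $1\le j\le k$, determines ideals in $\mathbb{V}'$. (In the displayed terms the $y$-variables are the ideal variables and the $x$-variables are parameters.)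
   Context: BIT speciale: the algebraic theory contains a constant $0$ and, for some $n\ge1$, binary terms $\alpha_1,\dots,\alpha_n$ and an $(n+1)$-ary term $\theta$ such that $\alpha_i(x,x)=0$ and $\theta(\alpha_1(x,y),\dots,\alpha_n(x,y),y)=x$ are identities; $\mathbb{V}'$ is then BIT speciale with the same terms. For a variety $\mathbb{W}$ with signature $\mathcal{G}$: an ideal term of $\mathbb{W}$ in the variables $y_1,\dots,y_p$ is a term $t(x_1,\dots,x_m,y_1,\dots,y_p)$ over $\mathcal{G}$ with $t(x_1,\dots,x_m,0,\dots,0)=0$ an identity of $\mathbb{W}$; a non-empty subset $H$ of a $\mathbb{W}$-algebra $A$ is an ideal if $t(a_1,\dots,a_m,b_1,\dots,b_p)\in H$ for every ideal term $t$, all $a_r\in A$, $b_s\in H$. A set $T$ of ideal terms determines ideals in $\mathbb{W}$ if for every $\mathbb{W}$-algebra $A$, a non-empty $H\subseteq A$ is an ideal iff every $t\in T$ takes values in $H$ whenever its $x$-variables are assigned elements of $A$ and its $y$-variables elements of $H$. *)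

(* Defs.v *)
From mathcomp Require Import all_boot.
Set Implicit Arguments. Unset Strict Implicit. Unset Printing Implicit Defensive.

Record sig := Sig { op : Type; ar : op -> nat }.

Definition subsig (s : sig) (P : op s -> Prop) : sig :=
  @Sig {f : op s | P f} (fun f => ar (proj1_sig f)).

Inductive term (s : sig) (X : Type) : Type :=
  | Var : X -> term s X
  | App : forall f : op s, ('I_(ar f) -> term s X) -> term s X.
Arguments Var {s X} _.
Arguments App {s X} f _.

Record algebra (s : sig) := Algebra {
  carrier :> Type;
  interp : forall f : op s, ('I_(ar f) -> carrier) -> carrier }.

Fixpoint eval (s : sig) (A : algebra s) (X : Type) (v : X -> A) (t : term s X) : A :=
  match t with
  | Var x => v x
  | App f a => @interp s A f (fun i => @eval s A X v (a i))
  end.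
Arguments eval {s} A {X} v t.

Fixpoint subst (s : sig) (X Y : Type) (sg : X -> term s Y) (t : term s X) : term s Y :=
  match t with
  | Var x => sg x
  | App f a => App f (fun i => subst sg (a i))
  end.

Fixpoint incl (s : sig) (P : op s -> Prop) (X : Type) (t : term (subsig P) X) : term s X :=
  match t with
  | Var x => Var x
  | App f a => @App s X (proj1_sig f) (fun i => incl (a i))
  end.

Definition identity (s : sig) := (term s nat * term s nat)%type.

Definition is_model (s : sig) (Sigma : identity s -> Prop) (A : algebra s) : Prop :=
  forall e, Sigma e -> forall v : nat -> A, eval A v e.1 = eval A v e.2.

Definition zval (s : sig) (A : algebra s) (z : term s void) : A :=
  eval A (fun v : void => match v with end) z.

Definition env2 (A : Type) (x y : A) : 'I_2 -> A :=
  fun b => if val b == 0 then x else y.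

Definition bit_speciale (s : sig) (Sigma : identity s -> Prop) (n : nat)
    (z : term s void) (alpha : 'I_n -> term s 'I_2) (theta : term s 'I_n.+1) : Prop :=
  0 < n /\
  forall A : algebra s, is_model Sigma A ->
    (forall (i : 'I_n) (x : A), eval A (env2 x x) (alpha i) = zval A z) /\
    (forall x y : A,
       eval A (fun k : 'I_n.+1 => match unlift ord_max k with
                                  | Some l => eval A (env2 x y) (alpha l)
                                  | None => y end) theta = x).

(* Terms in variables x_k (inl k, parameters) and y_k (inr k, ideal variables). *)
Definition ienv (A : Type) (a b : nat -> A) : nat + nat -> A :=
  fun v => match v with inl k => a k | inr k => b k end.

Definition ideal_term (s : sig) (Sigma : identity s -> Prop) (z : term s void)
    (t : term s (nat + nat)) : Prop :=
  forall A : algebra s, is_model Sigma A ->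
    forall a : nat -> A, eval A (ienv a (fun _ => zval A z)) t = zval A z.

Definition is_ideal (s : sig) (Sigma : identity s -> Prop) (z : term s void)
    (A : algebra s) (H : A -> Prop) : Prop :=
  (exists h, H h) /\
  forall t, ideal_term Sigma z t ->
    forall a b : nat -> A, (forall k, H (b k)) -> H (eval A (ienv a b) t).

Arguments is_ideal {s} Sigma z A H.

Definition determines_ideals (s : sig) (Sigma : identity s -> Prop) (z : term s void)
    (T : term s (nat + nat) -> Prop) : Prop :=
  (forall t, T t -> ideal_term Sigma z t) /\
  forall A : algebra s, is_model Sigma A ->
    forall H : A -> Prop, (exists h, H h) ->
      (is_ideal Sigma z A H <->
       forall t, T t -> forall a b : nat -> A, (forall k, H (b k)) -> H (eval A (ienv a b) t)).

Section NewTerms.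
Local Unset Implicit Arguments.
Variables (s : sig) (P : op s -> Prop) (n : nat).
Variables (alpha : 'I_n -> term (subsig P) 'I_2) (theta : term (subsig P) 'I_n.+1).

(* theta(y_{l_1},...,y_{l_n}, x_j) with y-variable indices given by yidx *)
Definition theta_at (yidx : 'I_n -> nat) (j : nat) : term s (nat + nat) :=
  subst (fun k : 'I_n.+1 => match unlift ord_max k with
                           | Some l => Var (inr (yidx l))
                           | None => Var (inl j) end) (incl theta).

Definition alpha_app (i : 'I_n) (u v : term s (nat + nat)) : term s (nat + nat) :=
  subst (fun b : 'I_2 => if val b == 0 then u else v) (incl (alpha i)).

Definition tau_x (tau : op s) : term s (nat + nat) :=
  App tau (fun j => Var (inl (val j))).

(* (a): alpha_i(tau(theta(y_{11..1n},x_1),...,theta(y_{k1..kn},x_k)), tau(x_1..x_k)),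
   with y_{jl} encoded as inr (j*n + l). *)
Definition term_a (tau : op s) (i : 'I_n) : term s (nat + nat) :=
  alpha_app i (App tau (fun j => theta_at (fun l => val j * n + val l) (val j))) (tau_x tau).

Definition term_b (tau : op s) (i : 'I_n) (j : 'I_(ar tau)) : term s (nat + nat) :=
  alpha_app i (App tau (fun j' => if j' == j then theta_at (fun l => val l) (val j)
                                  else Var (inl (val j')))) (tau_x tau).

Definition union_a (T : term (subsig P) (nat + nat) -> Prop) (t : term s (nat + nat)) : Prop :=
  (exists t0, T t0 /\ t = incl t0) \/
  (exists (tau : op s) (i : 'I_n), ~ P tau /\ t = term_a tau i).

Definition union_b (T : term (subsig P) (nat + nat) -> Prop) (t : term s (nat + nat)) : Prop :=
  (exists t0, T t0 /\ t = incl t0) \/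
  (exists (tau : op s) (i : 'I_n) (j : 'I_(ar tau)), ~ P tau /\ t = term_b tau i j).
End NewTerms.
Arguments union_a {s P n} alpha theta T t.
Arguments union_b {s P n} alpha theta T t.
Arguments term_a {s P n} alpha theta tau i.
Arguments term_b {s P n} alpha theta tau i j.

(* Main.v *)
Require Import Defs.
From mathcomp Require Import all_boot.
From Stdlib Require Import FunctionalExtensionality Classical.
Set Implicit Arguments. Unset Strict Implicit. Unset Printing Implicit Defensive.

Lemma eval_subst s (A : algebra s) X Y (v : Y -> A) (sg : X -> term s Y) t :
  eval A v (subst sg t) = eval A (fun x => eval A v (sg x)) t.
Proof.
elim: t => [x|f a IH] //=. f_equal. apply: functional_extensionality => i. exact: IH.
Qed.

Definition restr (F' : sig) (P : op F' -> Prop) (A : algebra F') : algebra (subsig P) :=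
  @Algebra (subsig P) A (fun f => @interp F' A (proj1_sig f)).

Lemma eval_incl F' P (A : algebra F') X (v : X -> A) (t : term (subsig P) X) :
  eval A v (incl t) = eval (restr P A) v t.
Proof.
elim: t => [x|f a IH] //=. f_equal. apply: functional_extensionality => i; exact: IH.
Qed.

Lemma restr_model F' P Sigma Sigma' (A : algebra F') :
  (forall e, Sigma e -> Sigma' (incl e.1, incl e.2)) -> is_model Sigma' A ->
  is_model Sigma (restr P A).
Proof. move=> HS HA e He v. have := HA _ (HS _ He) v. by rewrite /= !eval_incl. Qed.

Definition thenv (A : Type) n (f : 'I_n -> A) (y : A) : 'I_n.+1 -> A :=
  fun k => match unlift ord_max k with Some l => f l | None => y end.

Definition gen_a s n (al : 'I_n -> term s 'I_2) (th : term s 'I_n.+1)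
   (tau : op s) (i : 'I_n) : term s (nat + nat) :=
  subst (fun b : 'I_2 => if val b == 0 then
     App tau (fun j => subst (fun k : 'I_n.+1 => match unlift ord_max k with
                           | Some l => Var (inr (val j * n + val l))
                           | None => Var (inl (val j)) end) th)
     else App tau (fun j => Var (inl (val j)))) (al i).

Definition gen_b s n (al : 'I_n -> term s 'I_2) (th : term s 'I_n.+1)
   (tau : op s) (i : 'I_n) (j : 'I_(ar tau)) : term s (nat + nat) :=
  subst (fun b : 'I_2 => if val b == 0 then
     App tau (fun j' => if j' == j then subst (fun k : 'I_n.+1 => match unlift ord_max k with
        | Some l => Var (inr (val l)) | None => Var (inl (val j)) end) th
      else Var (inl (val j')))
     else App tau (fun j => Var (inl (val j)))) (al i).

Lemma term_a_gen F' P n alpha theta tau i :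
  @term_a F' P n alpha theta tau i = gen_a (fun i => incl (alpha i)) (incl theta) tau i.
Proof. by []. Qed.

Lemma term_b_gen F' P n alpha theta tau i j :
  @term_b F' P n alpha theta tau i j = @gen_b F' n (fun i => incl (alpha i)) (incl theta) tau i j.
Proof. by []. Qed.

Lemma eval_gen_a s (A : algebra s) n al th tau i (a b : nat -> A) :
  eval A (ienv a b) (@gen_a s n al th tau i) =
  eval A (env2 (@interp _ A tau (fun j => eval A (thenv (fun l => b (val j * n + val l)) (a (val j))) th))
               (@interp _ A tau (fun j => a (val j)))) (al i).
Proof.
rewrite /gen_a eval_subst; congr eval; apply: functional_extensionality => bb.
rewrite /env2; case: ifP => _ /=; f_equal; apply: functional_extensionality => j //.
rewrite eval_subst; congr eval; apply: functional_extensionality => k.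
by rewrite /thenv; case: (unlift ord_max k).
Qed.

Lemma eval_gen_b s (A : algebra s) n al th tau i j (a b : nat -> A) :
  eval A (ienv a b) (@gen_b s n al th tau i j) =
  eval A (env2 (@interp _ A tau (fun j' => if j' == j then
                 eval A (thenv (fun l => b (val l)) (a (val j))) th else a (val j')))
               (@interp _ A tau (fun j => a (val j)))) (al i).
Proof.
rewrite /gen_b eval_subst; congr eval; apply: functional_extensionality => bb.
rewrite /env2; case: ifP => _ /=; f_equal; apply: functional_extensionality => j' //.
case: ifP => _ //.
rewrite eval_subst; congr eval; apply: functional_extensionality => k.
by rewrite /thenv; case: (unlift ord_max k).
Qed.
Lemma th0 s (A : algebra s) n (al : 'I_n -> term s 'I_2) th (z0 : A)
  (Hal0 : forall i x, eval A (env2 x x) (al i) = z0)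
  (Hth : forall x y, eval A (thenv (fun l => eval A (env2 x y) (al l)) y) th = x) y :
  eval A (thenv (fun _ : 'I_n => z0) y) th = y.
Proof.
transitivity (eval A (thenv (fun l => eval A (env2 y y) (al l)) y) th); last exact: Hth.
congr eval; congr thenv; apply: functional_extensionality => l.
by rewrite Hal0.
Qed.

Lemma gen_a_ideal s (A : algebra s) n (al : 'I_n -> term s 'I_2) th (z0 : A)
  (Hal0 : forall i x, eval A (env2 x x) (al i) = z0)
  (Hth : forall x y, eval A (thenv (fun l => eval A (env2 x y) (al l)) y) th = x) tau i a :
  eval A (ienv a (fun _ => z0)) (gen_a al th tau i) = z0.
Proof.
rewrite eval_gen_a.
have -> : (fun j : 'I_(ar tau) => eval A (thenv (fun _ => z0) (a (val j))) th) =
          (fun j => a (val j)).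
  by apply: functional_extensionality => j; rewrite (th0 Hal0 Hth).
exact: Hal0.
Qed.

Lemma gen_b_ideal s (A : algebra s) n (al : 'I_n -> term s 'I_2) th (z0 : A)
  (Hal0 : forall i x, eval A (env2 x x) (al i) = z0)
  (Hth : forall x y, eval A (thenv (fun l => eval A (env2 x y) (al l)) y) th = x) tau i j a :
  eval A (ienv a (fun _ => z0)) (@gen_b s n al th tau i j) = z0.
Proof.
rewrite eval_gen_b.
have -> : (fun j' : 'I_(ar tau) => if j' == j then eval A (thenv (fun _ => z0) (a (val j))) th
             else a (val j')) = (fun j => a (val j)).
  apply: functional_extensionality => j'; rewrite (th0 Hal0 Hth).
  by case: eqP => [->|].
exact: Hal0.
Qed.

Lemma compat_a s (A : algebra s) n (al : 'I_n -> term s 'I_2) th (z0 : A) (H : A -> Prop)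
  (n0 : 0 < n) (Hz : H z0)
  (Hth : forall x y, eval A (thenv (fun l => eval A (env2 x y) (al l)) y) th = x) tau
  (Hcl : forall i a b, (forall k, H (b k)) -> H (eval A (ienv a b) (gen_a al th tau i)))
  (u v : 'I_(ar tau) -> A) :
  (forall j l, H (eval A (env2 (u j) (v j)) (al l))) ->
  forall i, H (eval A (env2 (@interp _ A tau u) (@interp _ A tau v)) (al i)).
Proof.
move=> Huv i.
pose a (k : nat) := if (insub k : option 'I_(ar tau)) is Some j then v j else z0.
pose b (k : nat) := if (insub (k %/ n) : option 'I_(ar tau)) is Some j then
     (if (insub (k %% n) : option 'I_n) is Some l then eval A (env2 (u j) (v j)) (al l) else z0)
     else z0.
have Hb : forall k, H (b k).
  move=> k; rewrite /b; case: insubP => [j _ _|_] //; case: insubP => [l _ _|_] //.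
have := Hcl i a b Hb; rewrite eval_gen_a.
have -> : (fun j : 'I_(ar tau) => a (val j)) = v.
  by apply: functional_extensionality => j; rewrite /a valK.
have -> : (fun j : 'I_(ar tau) => eval A (thenv (fun l => b (val j * n + val l)) (a (val j))) th) = u.
  apply: functional_extensionality => j; rewrite /a valK.
  transitivity (eval A (thenv (fun l => eval A (env2 (u j) (v j)) (al l)) (v j)) th); last exact: Hth.
  congr eval; congr thenv; apply: functional_extensionality => l.
  rewrite /b divnMDl // (divn_small (ltn_ord l)).
  rewrite (_ : val j + 0 = val j); last by rewrite addn0.
  rewrite (valK j) modnMDl (modn_small (ltn_ord l)).
  case: insubP => [l' _ /val_inj -> //|]; by rewrite ltn_ord.
done.
Qed.

Lemma compat_b s (A : algebra s) n (al : 'I_n -> term s 'I_2) th (z0 : A) (H : A -> Prop)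
  (Hz : H z0)
  (Hal0 : forall i x, eval A (env2 x x) (al i) = z0)
  (Hth : forall x y, eval A (thenv (fun l => eval A (env2 x y) (al l)) y) th = x) tau
  (Htrans : forall x y w, (forall i, H (eval A (env2 x y) (al i))) ->
       (forall i, H (eval A (env2 y w) (al i))) -> (forall i, H (eval A (env2 x w) (al i))))
  (Hcl : forall i j a b, (forall k, H (b k)) -> H (eval A (ienv a b) (@gen_b s n al th tau i j)))
  (u v : 'I_(ar tau) -> A) :
  (forall j l, H (eval A (env2 (u j) (v j)) (al l))) ->
  forall i, H (eval A (env2 (@interp _ A tau u) (@interp _ A tau v)) (al i)).
Proof.
move=> Huv.
pose w m := fun j : 'I_(ar tau) => if val j < m then u j else v j.
suff Hm : forall m i, H (eval A (env2 (@interp _ A tau (w m)) (@interp _ A tau v)) (al i)).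
  have := Hm (ar tau).
  have -> // : w (ar tau) = u.
  by apply: functional_extensionality => j; rewrite /w ltn_ord.
elim=> [|m IH].
  have -> : w 0 = v by apply: functional_extensionality.
  by move=> i; rewrite Hal0.
case: (ltnP m (ar tau)) => Hm; last first.
  have -> // : w m.+1 = w m.
  apply: functional_extensionality => j; rewrite /w.
  by rewrite (leq_trans (ltn_ord j) Hm) (leq_trans (ltn_ord j) (leqW Hm)).
apply: Htrans IH.
pose j := Ordinal Hm.
pose a (k : nat) := if (insub k : option 'I_(ar tau)) is Some j' then w m j' else z0.
pose b (k : nat) := if (insub k : option 'I_n) is Some l then eval A (env2 (u j) (v j)) (al l) else z0.
have Hb : forall k, H (b k).
  by move=> k; rewrite /b; case: insubP => [l _ _|_] //.
move=> i; have := Hcl i j a b Hb; rewrite eval_gen_b.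
have -> : (fun j' : 'I_(ar tau) => a (val j')) = w m.
  by apply: functional_extensionality => j'; rewrite /a valK.
have -> // : (fun j' : 'I_(ar tau) => if j' == j then
       eval A (thenv (fun l => b (val l)) (a (val j))) th else a (val j')) = w m.+1.
apply: functional_extensionality => j'.
case: eqP => [->|Hne].
  rewrite /w /= ltnSn /a (valK j) /w /= ltnn.
  transitivity (eval A (thenv (fun l => eval A (env2 (u j) (v j)) (al l)) (v j)) th); last exact: Hth.
  congr eval; congr thenv; apply: functional_extensionality => l.
  by rewrite /b valK.
have Hjm : val j' != m by apply/eqP => E; apply: Hne; apply: val_inj; rewrite E.
by rewrite /a valK /w ltnS [in RHS]leq_eqVlt (negbTE Hjm).
Qed.

Lemma eval_zt s (A : algebra s) X (v : X -> A) z :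
  eval A v (subst (fun x : void => match x with end) z) = zval A z.
Proof. rewrite eval_subst /zval; congr eval; apply: functional_extensionality; by case. Qed.

Definition thsub s n (yidx : 'I_n -> nat) (x : term s (nat + nat)) : 'I_n.+1 -> term s (nat + nat) :=
  fun k => match unlift ord_max k with Some l => Var (inr (yidx l)) | None => x end.

Lemma eval_thsub s (A : algebra s) n yidx x th (a b : nat -> A) :
  eval A (ienv a b) (subst (@thsub s n yidx x) th) =
  eval A (thenv (fun l => b (yidx l)) (eval A (ienv a b) x)) th.
Proof.
rewrite eval_subst; congr eval; apply: functional_extensionality => k.
by rewrite /thsub /thenv; case: (unlift ord_max k).
Qed.

Lemma bitB F' (P : op F' -> Prop) Sigma Sigma' n z alpha theta
  (HS : forall e, Sigma e -> Sigma' (incl e.1, incl e.2))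
  (Hbit : @bit_speciale (subsig P) Sigma n z alpha theta) (A : algebra F') (HA : is_model Sigma' A) :
  (forall i x, eval (restr P A) (env2 x x) (alpha i) = zval (restr P A) z) /\
  (forall x y, eval (restr P A) (thenv (fun l => eval (restr P A) (env2 x y) (alpha l)) y) theta = x).
Proof. case: Hbit => _ Hb. exact: Hb _ (restr_model HS HA). Qed.

Lemma zvalA F' (P : op F' -> Prop) (A : algebra F') z : zval A (incl z) = zval (restr P A) z.
Proof. by rewrite /zval eval_incl. Qed.

Lemma bitA F' (P : op F' -> Prop) Sigma Sigma' n z alpha theta
  (HS : forall e, Sigma e -> Sigma' (incl e.1, incl e.2))
  (Hbit : @bit_speciale (subsig P) Sigma n z alpha theta) (A : algebra F') (HA : is_model Sigma' A) :
  (forall i x, eval A (env2 x x) (incl (alpha i)) = zval A (incl z)) /\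
  (forall x y, eval A (thenv (fun l => eval A (env2 x y) (incl (alpha l))) y) (incl theta) = x).
Proof.
have [H1 H2] := bitB HS Hbit HA.
split; first by move=> i x; rewrite zvalA eval_incl; exact: H1.
move=> x y; rewrite eval_incl.
have -> : (fun l => eval A (env2 x y) (incl (alpha l))) = (fun l => eval (restr P A) (env2 x y) (alpha l)).
  by apply: functional_extensionality => l; rewrite eval_incl.
exact: H2.
Qed.

Lemma main_back F' (P : op F' -> Prop) Sigma Sigma' n z alpha theta T
  (HS : forall e, Sigma e -> Sigma' (incl e.1, incl e.2))
  (Hbit : @bit_speciale (subsig P) Sigma n z alpha theta)
  (Hdet : determines_ideals Sigma z T) (A : algebra F') (HA : is_model Sigma' A)
  (H : A -> Prop) (Hne : exists h, H h)
  (HT : forall t0 a b, T t0 -> (forall k, H (b k)) -> H (eval A (ienv a b) (incl t0)))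
  (Hnew : forall f, ~ P f -> H (zval (restr P A) z) ->
     (forall x y w, (forall i, H (eval (restr P A) (env2 x y) (alpha i))) ->
       (forall i, H (eval (restr P A) (env2 y w) (alpha i))) ->
       (forall i, H (eval (restr P A) (env2 x w) (alpha i)))) ->
     forall u v, (forall j i, H (eval (restr P A) (env2 (u j) (v j)) (alpha i))) ->
     forall i, H (eval (restr P A) (env2 (@interp _ A f u) (@interp _ A f v)) (alpha i))) :
  is_ideal Sigma' (incl z) A H.
Proof.
have HB := restr_model HS HA.
have n0 : 0 < n by case: Hbit.
have [Hal0 Hth] := bitB HS Hbit HA.
have HidB : is_ideal Sigma z (restr P A) H.
  apply/(Hdet.2 _ HB H Hne) => t Ht a b Hb.
  by rewrite -eval_incl; apply: HT.
have Hbit' : forall B', is_model Sigma B' ->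
  (forall i x, eval B' (env2 x x) (alpha i) = zval B' z) /\
  (forall x y, eval B' (thenv (fun l => eval B' (env2 x y) (alpha l)) y) theta = x).
  by move=> B' HB'; case: Hbit => _ Hb; exact: Hb.
set B := restr P A in Hal0 Hth HidB Hnew HB *.
set z0 := zval B z.
pose zt : term (subsig P) (nat + nat) := subst (fun x : void => match x with end) z.
have [h Hh] := Hne.
have Hz : H z0.
  have := HidB.2 zt _ (fun _ => h) (fun _ => h) (fun _ => Hh).
  rewrite eval_zt; apply.
  by move=> B' HB' a; rewrite eval_zt.
have Htrans : forall x y w, (forall i, H (eval B (env2 x y) (alpha i))) ->
       (forall i, H (eval B (env2 y w) (alpha i))) ->
       (forall i, H (eval B (env2 x w) (alpha i))).
  move=> x y w Hxy Hyw i.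
  pose tt := subst (fun bb : 'I_2 => if val bb == 0 then
     subst (thsub (fun l => val l) (subst (thsub (fun l => n + val l) (Var (inl 0))) theta)) theta
     else Var (inl 0)) (alpha i).
  have Etv : forall (B' : algebra (subsig P)) (a b : nat -> B'), eval B' (ienv a b) tt =
     eval B' (env2 (eval B' (thenv (fun l => b (val l))
         (eval B' (thenv (fun l => b (n + val l)) (a 0)) theta)) theta) (a 0)) (alpha i).
    move=> B' a b; rewrite eval_subst; congr eval; apply: functional_extensionality => bb.
    by rewrite /env2; case: ifP => _ //; rewrite !eval_thsub.
  pose a (k : nat) := w.
  pose b (k : nat) := if (insub k : option 'I_n) is Some l then eval B (env2 x y) (alpha l)
     else if (insub (k - n) : option 'I_n) is Some l then eval B (env2 y w) (alpha l) else z0.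
  have Hb : forall k, H (b k).
    move=> k; rewrite /b; case: insubP => [l _ _|_]; first exact: Hxy.
    case: insubP => [l _ _|_] //; exact: Hyw.
  have := HidB.2 tt _ a b Hb.
  have -> : eval B (ienv a b) tt = eval B (env2 x w) (alpha i).
    rewrite Etv; congr eval; congr env2.
    transitivity (eval B (thenv (fun l => eval B (env2 x y) (alpha l)) y) theta); last exact: Hth.
    congr eval; last congr thenv.
    - by apply: functional_extensionality => l; rewrite /b valK.
    transitivity (eval B (thenv (fun l => eval B (env2 y w) (alpha l)) w) theta); last exact: Hth.
    congr eval; congr thenv; apply: functional_extensionality => l.
    rewrite /b; case: insubP => [l' |]; first by rewrite ltnNge leq_addr.
    by rewrite addKn valK.
  apply => B' HB' a'.
  have [Hal0' Hth'] := Hbit' B' HB'.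
  by rewrite Etv !(th0 Hal0' Hth') Hal0'.
have Hcomp : forall f (u v : 'I_(ar f) -> A), (forall j i, H (eval B (env2 (u j) (v j)) (alpha i))) ->
     forall i, H (eval B (env2 (@interp _ A f u) (@interp _ A f v)) (alpha i)).
  move=> f u v Huv.
  case: (classic (P f)) => Pf; last exact: Hnew.
  apply: (@compat_a _ B n alpha theta z0 H n0 Hz Hth (exist P f Pf)) => // i a b Hb.
  apply: HidB.2 => // B' HB' a'.
  have [Hal0' Hth'] := Hbit' B' HB'.
  exact: gen_a_ideal.
have Hbz : forall x, H x -> forall i, H (eval B (env2 x z0) (alpha i)).
  move=> x Hx i.
  pose tt := subst (fun bb : 'I_2 => if val bb == 0 then Var (inr 0) else zt) (alpha i).
  have Etv : forall (B' : algebra (subsig P)) (a b : nat -> B'), eval B' (ienv a b) tt =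
     eval B' (env2 (b 0) (zval B' z)) (alpha i).
    move=> B' a b; rewrite eval_subst; congr eval; apply: functional_extensionality => bb.
    by rewrite /env2; case: ifP => _ //; rewrite eval_zt.
  have := HidB.2 tt _ (fun _ => x) (fun _ => x) (fun _ => Hx).
  rewrite Etv; apply => B' HB' a'.
  have [Hal0' Hth'] := Hbit' B' HB'.
  by rewrite Etv Hal0'.
have Hind : forall (a b : nat -> A), (forall k, H (b k)) -> forall t : term F' (nat + nat),
    forall i, H (eval B (env2 (eval A (ienv a b) t) (eval A (ienv a (fun _ => z0)) t)) (alpha i)).
  move=> a b Hb; elim => [[k|k]|f ts IH] /=.
  - by move=> i; rewrite Hal0.
  - exact: Hbz.
  - exact: Hcomp.
have Hfin : forall x, (forall i, H (eval B (env2 x z0) (alpha i))) -> H x.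
  move=> x Hx.
  pose tt := subst (thsub (fun l => val l) zt) theta.
  have Etv : forall (B' : algebra (subsig P)) (a b : nat -> B'), eval B' (ienv a b) tt =
     eval B' (thenv (fun l => b (val l)) (zval B' z)) theta.
    by move=> B' a b; rewrite eval_thsub eval_zt.
  pose b (k : nat) := if (insub k : option 'I_n) is Some l then eval B (env2 x z0) (alpha l) else z0.
  have Hb : forall k, H (b k).
    by move=> k; rewrite /b; case: insubP => [l _ _|_] //.
  have := HidB.2 tt _ (fun _ => x) b Hb.
  have -> : eval B (ienv (fun _ => x) b) tt = x.
    rewrite Etv -/z0.
    transitivity (eval B (thenv (fun l => eval B (env2 x z0) (alpha l)) z0) theta); last exact: Hth.
    by congr eval; congr thenv; apply: functional_extensionality => l; rewrite /b valK.
  apply => B' HB' a'.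
  have [Hal0' Hth'] := Hbit' B' HB'.
  by rewrite Etv (th0 Hal0' Hth').
split => // t Ht a b Hb.
apply: Hfin => i.
have := Hind a b Hb t i.
by rewrite /z0 /B -zvalA (Ht A HA a).
Qed.

Theorem corollary2p9 (F' : sig) (P : op F' -> Prop)
    (Sigma : identity (subsig P) -> Prop) (Sigma' : identity F' -> Prop)
    (n : nat) (z : term (subsig P) void)
    (alpha : 'I_n -> term (subsig P) 'I_2) (theta : term (subsig P) 'I_n.+1)
    (T : term (subsig P) (nat + nat) -> Prop) :
  (forall e, Sigma e -> Sigma' (incl e.1, incl e.2)) ->
  bit_speciale Sigma z alpha theta ->
  determines_ideals Sigma z T ->
  determines_ideals Sigma' (incl z) (union_a alpha theta T) /\
  determines_ideals Sigma' (incl z) (union_b alpha theta T).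
Proof.
move=> HS Hbit Hdet.
have n0 : 0 < n by case: Hbit.
have HTid : forall t0, T t0 -> ideal_term Sigma' (incl z) (incl t0).
  move=> t0 Ht A HA a; rewrite zvalA eval_incl.
  exact: (Hdet.1 _ Ht _ (restr_model HS HA) a).
have Pa : forall t, union_a alpha theta T t -> ideal_term Sigma' (incl z) t.
  move=> t [[t0 [Ht ->]]|[tau [i [_ ->]]]]; first exact: HTid.
  move=> A HA a; have [H1 H2] := bitA HS Hbit HA; rewrite term_a_gen; exact: gen_a_ideal.
have Pb : forall t, union_b alpha theta T t -> ideal_term Sigma' (incl z) t.
  move=> t [[t0 [Ht ->]]|[tau [i [j [_ ->]]]]]; first exact: HTid.
  move=> A HA a; have [H1 H2] := bitA HS Hbit HA; rewrite term_b_gen; exact: gen_b_ideal.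
split; split => // A HA H Hne; split.
- by case => _ Hid t Ht; apply: Hid; apply: Pa.
- move=> Hcl; apply: (main_back HS Hbit Hdet HA Hne).
    by move=> t0 a b Ht0 Hb; apply: Hcl => //; left; exists t0.
  move=> f Pf Hz Htr u v Huv i.
  have [H1 H2] := bitA HS Hbit HA.
  have Huv' : forall j l, H (eval A (env2 (u j) (v j)) (incl (alpha l))).
    by move=> j l; rewrite eval_incl.
  have Hz' : H (zval A (incl z)) by rewrite zvalA.
  rewrite -eval_incl.
  apply: (@compat_a _ A n (fun i => incl (alpha i)) (incl theta) (zval A (incl z)) H n0 Hz' H2 f) => //.
  by move=> i' a b Hb; rewrite -term_a_gen; apply: Hcl => //; right; exists f, i'.
- by case => _ Hid t Ht; apply: Hid; apply: Pb.
- move=> Hcl; apply: (main_back HS Hbit Hdet HA Hne).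
    by move=> t0 a b Ht0 Hb; apply: Hcl => //; left; exists t0.
  move=> f Pf Hz Htr u v Huv i.
  have [H1 H2] := bitA HS Hbit HA.
  have Huv' : forall j l, H (eval A (env2 (u j) (v j)) (incl (alpha l))).
    by move=> j l; rewrite eval_incl.
  have Hz' : H (zval A (incl z)) by rewrite zvalA.
  rewrite -eval_incl.
  apply: (@compat_b _ A n (fun i => incl (alpha i)) (incl theta) (zval A (incl z)) H Hz' H1 H2 f) => //.
    move=> x y w Hxy Hyw i'; rewrite eval_incl.
    by apply: (Htr x y w) => i''; rewrite -eval_incl.
  by move=> i' j a b Hb; rewrite -term_b_gen; apply: Hcl => //; right; exists f, i', j.
Qed.
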